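(* Suppose the total preorder $\succeq$ on $\mathcal{Q}_b$ is continuous (with respect to uniform convergence), monotonic, and satisfies the dual independence axiom. Then there exists a nonnegative, bounded, finitely additive measure $\mu$ on $\Sigma$ such that the functional $$U(\Phi)=\int_0^1\Phi(p)\,\mu(dp),\qquad \Phi\in B((0,1],\Sigma),$$ (integral with respect to a finitely additive measure) restricted to $\mathcal{Q}_b$ is a numerical representation of $\succeq$.
   Context: $\mathcal{Q}_b$ is the set of bounded, nondecreasing, left-continuous functions on $(0,1]$. $\Sigma$ is the algebra of subsets of $(0,1]$ generated by finite unions and intersections of intervals $(a,b]$, $0<a<b\le1$. $B((0,1],\Sigma)$ is the Banach space (sup norm) of uniform limits of $\Sigma$-simple functions $\sum\alpha_i\mathbf{1}_{A_i}$. Integration of functions in $B((0,1],\Sigma)$ against a bounded finitely additive measure is in the sense of Dunford–Schwartz. A total preorder is reflexive, transitive, complete; $\succ$ its strict part; continuity means closed upper and lower contour sets. Monotonic: $\Phi\ge\Psi$ pointwise implies $\Phi\succeq\Psi$. Dual independence axiom: $\Phi\succ\Psi$ implies $\alpha\Phi+(1-\alpha)\Upsilon\succ\alpha\Psi+(1-\alpha)\Upsilon$ for all $\Upsilon\in\mathcal{Q}_b$, $\alpha\in(0,1)$. Numerical representation: $\Phi\succ\Psi\iff U(\Phi)>U(\Psi)$. *)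

(* Defs.v *)
From Stdlib Require Import Reals List ClassicalEpsilon.
Open Scope R_scope.

(* Functions on (0,1] are represented as R -> R; only values on (0,1] matter. *)
Definition unit_int (x : R) : Prop := 0 < x <= 1.

Definition in_Qb (Phi : R -> R) : Prop :=
  (exists M, forall x, unit_int x -> Rabs (Phi x) <= M) /\
  (forall x y, unit_int x -> unit_int y -> x <= y -> Phi x <= Phi y) /\
  (forall p, unit_int p -> forall eps, eps > 0 ->
     exists delta, delta > 0 /\
       forall q, 0 < q -> p - delta < q -> q <= p -> Rabs (Phi q - Phi p) < eps).

(* The algebra Sigma of subsets of (0,1] generated by the intervals (a,b],
   0 < a < b <= 1 (an algebra on (0,1]: contains (0,1], closed under
   relative complement and finite unions; sets are predicates, taken up to
   extensional equality). *)
Inductive Sigma : (R -> Prop) -> Prop :=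
| Sigma_int : forall a b, 0 < a -> a < b -> b <= 1 -> Sigma (fun x => a < x <= b)
| Sigma_full : Sigma unit_int
| Sigma_compl : forall A, Sigma A -> Sigma (fun x => unit_int x /\ ~ A x)
| Sigma_union : forall A B, Sigma A -> Sigma B -> Sigma (fun x => A x \/ B x)
| Sigma_inter : forall A B, Sigma A -> Sigma B -> Sigma (fun x => A x /\ B x)
| Sigma_ext : forall A B, Sigma A -> (forall x, A x <-> B x) -> Sigma B.

Definition fa_measure (mu : (R -> Prop) -> R) : Prop :=
  (forall A B, Sigma A -> Sigma B -> (forall x, ~ (A x /\ B x)) ->
     mu (fun x => A x \/ B x) = mu A + mu B).

Definition nonneg_measure (mu : (R -> Prop) -> R) : Prop :=
  forall A, Sigma A -> 0 <= mu A.

Definition bounded_measure (mu : (R -> Prop) -> R) : Prop :=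
  exists M, forall A, Sigma A -> Rabs (mu A) <= M.

Definition indic (A : R -> Prop) (x : R) : R :=
  if excluded_middle_informative (A x) then 1 else 0.

(* Sigma-simple functions sum_i alpha_i 1_{A_i}, given as lists of (alpha_i, A_i). *)
Definition simple_ok (s : list (R * (R -> Prop))) : Prop :=
  forall c, In c s -> Sigma (snd c).

Definition simple_val (s : list (R * (R -> Prop))) (x : R) : R :=
  fold_right (fun c acc => fst c * indic (snd c) x + acc) 0 s.

Definition simple_int (mu : (R -> Prop) -> R) (s : list (R * (R -> Prop))) : R :=
  fold_right (fun c acc => fst c * mu (snd c) + acc) 0 s.

Definition in_B_Sigma (Phi : R -> R) : Prop :=
  forall delta, delta > 0 ->
    exists s, simple_ok s /\ forall x, unit_int x -> Rabs (Phi x - simple_val s x) < delta.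

Definition DS_integral (mu : (R -> Prop) -> R) (Phi : R -> R) (I : R) : Prop :=
  in_B_Sigma Phi /\
  forall eps, eps > 0 -> exists delta, delta > 0 /\
    forall s, simple_ok s ->
      (forall x, unit_int x -> Rabs (Phi x - simple_val s x) < delta) ->
      Rabs (simple_int mu s - I) < eps.

Definition total_preorder (pref : (R -> R) -> (R -> R) -> Prop) : Prop :=
  (forall F, in_Qb F -> pref F F) /\
  (forall F G H, in_Qb F -> in_Qb G -> in_Qb H -> pref F G -> pref G H -> pref F H) /\
  (forall F G, in_Qb F -> in_Qb G -> pref F G \/ pref G F).

Definition strict (pref : (R -> R) -> (R -> R) -> Prop) (F G : R -> R) : Prop :=
  pref F G /\ ~ pref G F.

Definition unif_conv (Fn : nat -> R -> R) (F : R -> R) : Prop :=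
  forall eps, eps > 0 -> exists N, forall n, (n >= N)%nat ->
    forall x, unit_int x -> Rabs (Fn n x - F x) < eps.

Definition pref_continuous (pref : (R -> R) -> (R -> R) -> Prop) : Prop :=
  forall G Fn F, in_Qb G -> (forall n, in_Qb (Fn n)) -> in_Qb F -> unif_conv Fn F ->
    ((forall n, pref (Fn n) G) -> pref F G) /\
    ((forall n, pref G (Fn n)) -> pref G F).

Definition pref_monotonic (pref : (R -> R) -> (R -> R) -> Prop) : Prop :=
  forall F G, in_Qb F -> in_Qb G -> (forall p, unit_int p -> F p >= G p) -> pref F G.

Definition dual_independence (pref : (R -> R) -> (R -> R) -> Prop) : Prop :=
  forall F G H alpha, in_Qb F -> in_Qb G -> in_Qb H -> 0 < alpha < 1 ->
    strict pref F G ->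
    strict pref (fun p => alpha * F p + (1 - alpha) * H p)
                (fun p => alpha * G p + (1 - alpha) * H p).

(* Main.v *)
Require Import Defs.
From Stdlib Require Import Reals Lra Lia Classical ClassicalEpsilon List.
Open Scope R_scope.

Lemma abs_lt x a : Rabs x < a <-> - a < x < a.
Proof. unfold Rabs; destruct Rcase_abs; split; intros; lra. Qed.
Lemma abs_le x a : Rabs x <= a <-> - a <= x <= a.
Proof. unfold Rabs; destruct Rcase_abs; split; intros; lra. Qed.

Definition cst (k : R) : R -> R := fun _ => k.

Lemma Qb_cst k : in_Qb (cst k).
Proof.
  split; [|split].
  - exists (Rabs k); intros; unfold cst; lra.
  - intros; unfold cst; lra.
  - intros p _ eps He; exists 1; split; [lra|]; intros; unfold cst.
    apply abs_lt; lra.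
Qed.

Lemma Qb_plus F G : in_Qb F -> in_Qb G -> in_Qb (fun p => F p + G p).
Proof.
  intros [[M1 HM1] [Hm1 Hl1]] [[M2 HM2] [Hm2 Hl2]]; split; [|split].
  - exists (M1 + M2); intros x Hx; specialize (HM1 x Hx); specialize (HM2 x Hx).
    apply abs_le in HM1; apply abs_le in HM2; apply abs_le; lra.
  - intros x y Hx Hy Hxy; specialize (Hm1 x y Hx Hy Hxy); specialize (Hm2 x y Hx Hy Hxy); lra.
  - intros p Hp eps He.
    destruct (Hl1 p Hp (eps/2)) as [d1 [Hd1 H1]]; [lra|].
    destruct (Hl2 p Hp (eps/2)) as [d2 [Hd2 H2]]; [lra|].
    exists (Rmin d1 d2); split; [apply Rmin_pos; lra|].
    intros q Hq1 Hq2 Hq3.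
    assert (A1 := H1 q Hq1 ltac:(pose proof (Rmin_l d1 d2); lra) Hq3).
    assert (A2 := H2 q Hq1 ltac:(pose proof (Rmin_r d1 d2); lra) Hq3).
    apply abs_lt in A1; apply abs_lt in A2; apply abs_lt; lra.
Qed.

Lemma Qb_scal a F : 0 <= a -> in_Qb F -> in_Qb (fun p => a * F p).
Proof.
  intros Ha [[M1 HM1] [Hm1 Hl1]]; split; [|split].
  - exists (a * Rabs M1); intros x Hx; specialize (HM1 x Hx).
    apply abs_le in HM1; apply abs_le.
    assert (Rabs M1 >= M1) by (apply Rle_ge, Rle_abs).
    split; nra.
  - intros x y Hx Hy Hxy; specialize (Hm1 x y Hx Hy Hxy); nra.
  - intros p Hp eps He.
    destruct (Hl1 p Hp (eps/(a+1))) as [d1 [Hd1 H1]].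
    { apply Rdiv_lt_0_compat; lra. }
    exists d1; split; [lra|].
    intros q Hq1 Hq2 Hq3.
    assert (A1 := H1 q Hq1 Hq2 Hq3).
    apply abs_lt in A1; apply abs_lt.
    assert (eps / (a+1) * (a+1) = eps) by (field; lra).
    split; nra.
Qed.

Definition mix (al : R) (F H : R -> R) : R -> R := fun p => al * F p + (1 - al) * H p.

Lemma Qb_mix al F H : 0 <= al <= 1 -> in_Qb F -> in_Qb H -> in_Qb (mix al F H).
Proof.
  intros Ha HF HH; unfold mix.
  apply (Qb_plus (fun p => al * F p) (fun p => (1 - al) * H p));
    apply Qb_scal; auto; lra.
Qed.

Lemma Qb_max F G : in_Qb F -> in_Qb G -> in_Qb (fun p => Rmax (F p) (G p)).
Proof.
  intros [[M1 HM1] [Hm1 Hl1]] [[M2 HM2] [Hm2 Hl2]]; split; [|split].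
  - exists (Rabs M1 + Rabs M2); intros x Hx; specialize (HM1 x Hx); specialize (HM2 x Hx).
    apply abs_le in HM1; apply abs_le in HM2; apply abs_le.
    assert (Rabs M1 >= M1) by (apply Rle_ge, Rle_abs).
    assert (Rabs M2 >= M2) by (apply Rle_ge, Rle_abs).
    unfold Rmax; destruct Rle_dec; lra.
  - intros x y Hx Hy Hxy; specialize (Hm1 x y Hx Hy Hxy); specialize (Hm2 x y Hx Hy Hxy).
    unfold Rmax; do 2 destruct Rle_dec; lra.
  - intros p Hp eps He.
    destruct (Hl1 p Hp eps) as [d1 [Hd1 H1]]; [lra|].
    destruct (Hl2 p Hp eps) as [d2 [Hd2 H2]]; [lra|].
    exists (Rmin d1 d2); split; [apply Rmin_pos; lra|].
    intros q Hq1 Hq2 Hq3.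
    assert (A1 := H1 q Hq1 ltac:(pose proof (Rmin_l d1 d2); lra) Hq3).
    assert (A2 := H2 q Hq1 ltac:(pose proof (Rmin_r d1 d2); lra) Hq3).
    apply abs_lt in A1; apply abs_lt in A2; apply abs_lt.
    unfold Rmax; do 2 destruct Rle_dec; lra.
Qed.

Lemma Qb_min F G : in_Qb F -> in_Qb G -> in_Qb (fun p => Rmin (F p) (G p)).
Proof.
  intros [[M1 HM1] [Hm1 Hl1]] [[M2 HM2] [Hm2 Hl2]]; split; [|split].
  - exists (Rabs M1 + Rabs M2); intros x Hx; specialize (HM1 x Hx); specialize (HM2 x Hx).
    apply abs_le in HM1; apply abs_le in HM2; apply abs_le.
    assert (Rabs M1 >= M1) by (apply Rle_ge, Rle_abs).
    assert (Rabs M2 >= M2) by (apply Rle_ge, Rle_abs).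
    unfold Rmin; destruct Rle_dec; lra.
  - intros x y Hx Hy Hxy; specialize (Hm1 x y Hx Hy Hxy); specialize (Hm2 x y Hx Hy Hxy).
    unfold Rmin; do 2 destruct Rle_dec; lra.
  - intros p Hp eps He.
    destruct (Hl1 p Hp eps) as [d1 [Hd1 H1]]; [lra|].
    destruct (Hl2 p Hp eps) as [d2 [Hd2 H2]]; [lra|].
    exists (Rmin d1 d2); split; [apply Rmin_pos; lra|].
    intros q Hq1 Hq2 Hq3.
    assert (A1 := H1 q Hq1 ltac:(pose proof (Rmin_l d1 d2); lra) Hq3).
    assert (A2 := H2 q Hq1 ltac:(pose proof (Rmin_r d1 d2); lra) Hq3).
    apply abs_lt in A1; apply abs_lt in A2; apply abs_lt.
    unfold Rmin; do 2 destruct Rle_dec; lra.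
Qed.

Definition step (t : R) : R -> R := fun x => if Rlt_dec t x then 1 else 0.

Lemma Qb_step t : in_Qb (step t).
Proof.
  unfold step; split; [|split].
  - exists 1; intros; destruct Rlt_dec; apply abs_le; lra.
  - intros x y _ _ Hxy; do 2 destruct Rlt_dec; lra.
  - intros p Hp eps He.
    destruct (Rlt_dec t p).
    + exists (p - t); split; [lra|]; intros q _ Hq _.
      destruct Rlt_dec; [|lra]; apply abs_lt; lra.
    + exists 1; split; [lra|]; intros q _ _ Hq.
      destruct Rlt_dec; [lra|]; apply abs_lt; lra.
Qed.

Definition indf (pref : (R -> R) -> (R -> R) -> Prop) F G := pref F G /\ pref G F.

Definition Good pref := total_preorder pref /\ pref_continuous pref /\
  pref_monotonic pref /\ dual_independence pref.


Lemma p_trans pref : Good pref -> forall F G H, in_Qb F -> in_Qb G -> in_Qb H ->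
  pref F G -> pref G H -> pref F H.
Proof. intros [[_ [T _]] _]; exact T. Qed.
Lemma p_total pref : Good pref -> forall F G, in_Qb F -> in_Qb G -> pref F G \/ pref G F.
Proof. intros [[_ [_ T]] _]; exact T. Qed.
Lemma p_refl pref : Good pref -> forall F, in_Qb F -> pref F F.
Proof. intros [[T _] _]; exact T. Qed.
Lemma p_mono pref : Good pref -> forall F G, in_Qb F -> in_Qb G ->
  (forall p, unit_int p -> F p >= G p) -> pref F G.
Proof. intros [_ [_ [T _]]]; exact T. Qed.

Lemma p_ext pref : Good pref -> forall F G, in_Qb F -> in_Qb G ->
  (forall p, unit_int p -> F p = G p) -> indf pref F G.
Proof.
  intros Gd F G HF HG E; split; apply p_mono; auto; intros p Hp; rewrite (E p Hp); lra.
Qed.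

Lemma ind_trans pref : Good pref -> forall F G H, in_Qb F -> in_Qb G -> in_Qb H ->
  indf pref F G -> indf pref G H -> indf pref F H.
Proof.
  intros Gd F G H HF HG HH [A B] [C D]; split.
  - apply (p_trans _ Gd F G H); auto.
  - apply (p_trans _ Gd H G F); auto.
Qed.

Lemma ind_sym pref F G : indf pref F G -> indf pref G F.
Proof. intros [A B]; split; auto. Qed.

Lemma strict_ind pref : Good pref -> forall F F' G G', in_Qb F -> in_Qb F' -> in_Qb G -> in_Qb G' ->
  indf pref F F' -> indf pref G G' -> strict pref F' G' -> strict pref F G.
Proof.
  intros Gd F F' G G' HF HF' HG HG' [A B] [C D] [E N]; split.
  - apply (p_trans _ Gd F F' G); auto. apply (p_trans _ Gd F' G' G); auto.
  - intro K; apply N. apply (p_trans _ Gd G' G F'); auto. apply (p_trans _ Gd G F F'); auto.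
Qed.

Lemma strict_trans pref : Good pref -> forall F G H, in_Qb F -> in_Qb G -> in_Qb H ->
  strict pref F G -> strict pref G H -> strict pref F H.
Proof.
  intros Gd F G H HF HG HH [A B] [C D]; split.
  - apply (p_trans _ Gd F G H); auto.
  - intro K; apply D. apply (p_trans _ Gd H F G); auto.
Qed.

Lemma strict_pref_trans pref : Good pref -> forall F G H, in_Qb F -> in_Qb G -> in_Qb H ->
  strict pref F G -> pref G H -> strict pref F H.
Proof.
  intros Gd F G H HF HG HH [A B] C; split.
  - apply (p_trans _ Gd F G H); auto.
  - intro K; apply B. apply (p_trans _ Gd G H F); auto.
Qed.

Lemma pref_strict_trans pref : Good pref -> forall F G H, in_Qb F -> in_Qb G -> in_Qb H ->
  pref F G -> strict pref G H -> strict pref F H.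
Proof.
  intros Gd F G H HF HG HH A [B C]; split.
  - apply (p_trans _ Gd F G H); auto.
  - intro K; apply C. apply (p_trans _ Gd H F G); auto.
Qed.

Definition en (n : nat) : R := / (INR n + 1).

Lemma en_pos n : 0 < en n.
Proof. unfold en; apply Rinv_0_lt_compat; pose proof (pos_INR n); lra. Qed.

Lemma en_small eps : eps > 0 -> exists N, forall n, (n >= N)%nat -> en n < eps.
Proof.
  intros He; destruct (archimed_cor1 eps He) as [N [HN HN0]]; exists N; intros n Hn.
  unfold en. apply le_INR in Hn.
  assert (0 < INR N) by (apply lt_0_INR; auto).
  apply Rle_lt_trans with (/ INR N); auto.
  apply Rinv_le_contravar; lra.
Qed.

Lemma unif_lemma (Fn : nat -> R -> R) F C : 0 <= C ->
  (forall n x, unit_int x -> Rabs (Fn n x - F x) <= C * en n) -> unif_conv Fn F.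
Proof.
  intros HC H eps He.
  destruct (en_small (eps / (C + 1))) as [N HN]; [apply Rdiv_lt_0_compat; lra|].
  exists N; intros n Hn x Hx.
  specialize (HN n Hn); specialize (H n x Hx).
  assert (eps / (C+1) * (C+1) = eps) by (field; lra).
  pose proof (en_pos n).
  assert (C * en n < eps) by nra. lra.
Qed.

Lemma p_dual pref : Good pref -> dual_independence pref.
Proof. intros [_ [_ [_ T]]]; exact T. Qed.
Lemma p_cont pref : Good pref -> pref_continuous pref.
Proof. intros [_ [T _]]; exact T. Qed.

Lemma strict_consts pref : Good pref -> forall a b, ~ pref (cst b) (cst a) ->
  forall x y, y < x -> strict pref (cst x) (cst y).
Proof.
  intros Gd a b Nab.
  assert (Hab : b < a).
  { destruct (Rlt_dec b a) as [h|h]; auto. exfalso; apply Nab.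
    apply (p_mono _ Gd); try apply Qb_cst. intros; unfold cst; lra. }
  assert (Sab : strict pref (cst a) (cst b)).
  { split; auto. apply (p_mono _ Gd); try apply Qb_cst. intros; unfold cst; lra. }
  set (d := a - b).
  assert (small : forall x y, y < x -> x - y < d -> strict pref (cst x) (cst y)).
  { intros x y Hxy Hd.
    set (al := (x - y) / d).
    assert (Hal : 0 < al < 1).
    { unfold al; split. apply Rdiv_lt_0_compat; unfold d in *; lra.
      apply (Rmult_lt_reg_r d); unfold d in *; [lra|]. field_simplify; lra. }
    assert (Hald : al * d = x - y) by (unfold al, d in *; field; lra).
    set (k := (y - al * b) / (1 - al)).
    assert (Hs := p_dual _ Gd (cst a) (cst b) (cst k) al (Qb_cst a) (Qb_cst b) (Qb_cst k) Hal Sab).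
    apply (strict_ind _ Gd _ (fun p => al * cst a p + (1 - al) * cst k p) _
             (fun p => al * cst b p + (1 - al) * cst k p)); auto;
      try apply Qb_cst; try (apply (Qb_mix al); [lra| apply Qb_cst| apply Qb_cst]).
    - apply (p_ext _ Gd); try apply Qb_cst;
        try (apply (Qb_mix al); [lra| apply Qb_cst| apply Qb_cst]).
      intros; unfold cst, k. unfold d in Hald. field_simplify; [|lra]. nra.
    - apply (p_ext _ Gd); try apply Qb_cst;
        try (apply (Qb_mix al); [lra| apply Qb_cst| apply Qb_cst]).
      intros; unfold cst, k. field_simplify; [|lra]. nra. }
  assert (ind_step : forall n x y, y < x -> x - y < INR (S n) * d -> strict pref (cst x) (cst y)).
  { induction n as [|n IH]; intros x y Hxy Hd.
    - apply small; auto. simpl in Hd; lra.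
    - destruct (Rlt_dec (x - y) d) as [h|h]; [apply small; auto|].
      set (m := INR (S (S n))).
      assert (Hm : m = INR (S n) + 1) by (unfold m; rewrite S_INR; auto).
      assert (HSn : 1 <= INR (S n)) by (rewrite S_INR; pose proof (pos_INR n); lra).
      set (z := x - (x - y) / m).
      assert (Hz1 : x - z < d).
      { unfold z. apply (Rmult_lt_reg_r m); [lra|]. field_simplify; [|lra]. fold m in Hd. lra. }
      assert (Hz2 : z - y < INR (S n) * d).
      { unfold z. apply (Rmult_lt_reg_r m); [lra|]. field_simplify; [|lra].
        fold m in Hd. rewrite Hm in *. nra. }
      assert (Hz3 : (x - y) / m < x - y).
      { apply (Rmult_lt_reg_r m); [lra|]. field_simplify; [|lra]. nra. }
      assert (Hz4 : 0 < (x - y) / m) by (apply Rdiv_lt_0_compat; lra).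
      apply (strict_trans _ Gd _ (cst z)); try apply Qb_cst.
      + apply small; unfold z in *; lra.
      + apply IH; unfold z in *; lra. }
  intros x y Hxy.
  destruct (archimed_cor1 (d / (x - y))) as [N [HN HN0]].
  { apply Rdiv_lt_0_compat; unfold d; lra. }
  destruct N as [|n]; [lia|].
  apply (ind_step n); auto.
  assert (0 < INR (S n)) by (apply lt_0_INR; lia).
  apply (Rmult_lt_compat_r (INR (S n) * (x - y))) in HN; [|nra].
  field_simplify in HN; [|lra|lra]. lra.
Qed.

Lemma degenerate pref : Good pref -> (forall a b, pref (cst b) (cst a)) ->
  forall F G, in_Qb F -> in_Qb G -> pref F G.
Proof.
  intros Gd D F G HF HG.
  destruct HF as [[M1 HM1] R1]; destruct HG as [[M2 HM2] R2].
  assert (HF : in_Qb F) by (split; [exists M1|]; auto).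
  assert (HG : in_Qb G) by (split; [exists M2|]; auto).
  apply (p_trans _ Gd _ (cst (-M1))); auto; try apply Qb_cst.
  - apply (p_mono _ Gd); auto; try apply Qb_cst.
    intros p Hp; specialize (HM1 p Hp); apply abs_le in HM1; unfold cst; lra.
  - apply (p_trans _ Gd _ (cst M2)); auto; try apply Qb_cst.
    apply (p_mono _ Gd); auto; try apply Qb_cst.
    intros p Hp; specialize (HM2 p Hp); apply abs_le in HM2; unfold cst; lra.
Qed.

Definition ND pref := forall x y, y < x -> strict pref (cst x) (cst y).

Lemma cst_conv_m s : unif_conv (fun n => cst (s - en n)) (cst s).
Proof.
  apply (unif_lemma _ _ 1); [lra|]. intros n x _; unfold cst.
  pose proof (en_pos n). apply abs_le; lra.
Qed.
Lemma cst_conv_p s : unif_conv (fun n => cst (s + en n)) (cst s).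
Proof.
  apply (unif_lemma _ _ 1); [lra|]. intros n x _; unfold cst.
  pose proof (en_pos n). apply abs_le; lra.
Qed.

Lemma ce_exists pref : Good pref -> ND pref -> forall F, in_Qb F ->
  exists k, indf pref F (cst k).
Proof.
  intros Gd Nd F HF.
  destruct HF as [[M HM] R1].
  assert (HF : in_Qb F) by (split; [exists M|]; auto).
  set (A := fun k => pref F (cst k)).
  assert (Hb : bound A).
  { exists M; intros k Hk; unfold A in Hk.
    destruct (Rle_dec k M) as [h|h]; auto. exfalso.
    assert (S := Nd k M ltac:(lra)). destruct S as [_ S]; apply S.
    apply (p_trans _ Gd _ F); auto; try apply Qb_cst.
    apply (p_mono _ Gd); auto; try apply Qb_cst.
    intros p Hp; specialize (HM p Hp); apply abs_le in HM; unfold cst; lra. }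
  assert (Hne : exists x, A x).
  { exists (-M); unfold A. apply (p_mono _ Gd); auto; try apply Qb_cst.
    intros p Hp; specialize (HM p Hp); apply abs_le in HM; unfold cst; lra. }
  destruct (completeness A Hb Hne) as [s [Hs1 Hs2]].
  exists s; split.
  - apply (proj2 (p_cont _ Gd F (fun n => cst (s - en n)) (cst s) HF
                   (fun n => Qb_cst _) (Qb_cst _)
                   (cst_conv_m s))).
    intros n. pose proof (en_pos n).
    destruct (classic (exists k, A k /\ s - en n < k)) as [[k [Hk1 Hk2]]|Hn].
    + apply (p_trans _ Gd _ (cst k)); auto; try apply Qb_cst.
      apply (p_mono _ Gd); try apply Qb_cst; intros; unfold cst; lra.
    + exfalso. assert (s <= s - en n); [|lra].
      apply Hs2; intros k Hk. destruct (Rle_dec k (s - en n)); auto.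
      exfalso; apply Hn; exists k; split; auto; lra.
  - apply (proj1 (p_cont _ Gd F (fun n => cst (s + en n)) (cst s) HF
                   (fun n => Qb_cst _) (Qb_cst _)
                   (cst_conv_p s))).
    intros n. pose proof (en_pos n).
    destruct (p_total _ Gd (cst (s + en n)) F (Qb_cst _) HF) as [h|h]; auto.
    exfalso. assert (s + en n <= s); [apply Hs1; exact h|lra].
Qed.

Definition ce pref (F : R -> R) : R :=
  match excluded_middle_informative (exists k, indf pref F (cst k)) with
  | left h => proj1_sig (constructive_indefinite_description _ h)
  | right _ => 0
  end.

Lemma ce_spec pref : Good pref -> ND pref -> forall F, in_Qb F -> indf pref F (cst (ce pref F)).
Proof.
  intros Gd Nd F HF. unfold ce.
  destruct excluded_middle_informative as [h|h].
  - exact (proj2_sig (constructive_indefinite_description _ h)).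
  - exfalso; apply h; apply ce_exists; auto.
Qed.

Lemma cst_ind_eq pref : Good pref -> ND pref -> forall a b, indf pref (cst a) (cst b) -> a = b.
Proof.
  intros Gd Nd a b [A B].
  destruct (Rtotal_order a b) as [h|[h|h]]; auto.
  - destruct (Nd b a h) as [_ N]; contradiction.
  - destruct (Nd a b h) as [_ N]; contradiction.
Qed.

Lemma ce_unique pref : Good pref -> ND pref -> forall F k, in_Qb F -> indf pref F (cst k) ->
  ce pref F = k.
Proof.
  intros Gd Nd F k HF H. apply (cst_ind_eq _ Gd Nd).
  apply (ind_trans _ Gd _ F); try apply Qb_cst; auto.
  apply ind_sym, ce_spec; auto.
Qed.

Lemma ce_cst pref : Good pref -> ND pref -> forall k, ce pref (cst k) = k.
Proof.
  intros Gd Nd k; apply ce_unique; auto; try apply Qb_cst.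
  split; apply (p_refl _ Gd); apply Qb_cst.
Qed.

Lemma ce_ext pref : Good pref -> ND pref -> forall F G, in_Qb F -> in_Qb G ->
  (forall p, unit_int p -> F p = G p) -> ce pref F = ce pref G.
Proof.
  intros Gd Nd F G HF HG E. apply ce_unique; auto.
  apply (ind_trans _ Gd _ G); auto; try apply Qb_cst.
  - apply (p_ext _ Gd); auto.
  - apply ce_spec; auto.
Qed.

Lemma ce_strict pref : Good pref -> ND pref -> forall F G, in_Qb F -> in_Qb G ->
  (strict pref F G <-> ce pref F > ce pref G).
Proof.
  intros Gd Nd F G HF HG.
  assert (E1 := ce_spec _ Gd Nd F HF); assert (E2 := ce_spec _ Gd Nd G HG).
  split.
  - intros [A B]. destruct (Rlt_dec (ce pref G) (ce pref F)) as [h|h]; [lra|].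
    exfalso; apply B.
    apply (p_trans _ Gd _ (cst (ce pref G))); auto; try apply Qb_cst; [apply E2|].
    apply (p_trans _ Gd _ (cst (ce pref F))); auto; try apply Qb_cst; [|apply E1].
    apply (p_mono _ Gd); try apply Qb_cst; intros; unfold cst; lra.
  - intros h. apply (strict_ind _ Gd _ (cst (ce pref F)) _ (cst (ce pref G))); auto;
      try apply Qb_cst; try (apply Nd; lra).
Qed.

Lemma ce_mono pref : Good pref -> ND pref -> forall F G, in_Qb F -> in_Qb G ->
  (forall p, unit_int p -> F p >= G p) -> ce pref F >= ce pref G.
Proof.
  intros Gd Nd F G HF HG H.
  destruct (Rlt_dec (ce pref F) (ce pref G)) as [h|h]; [|lra].
  exfalso. apply (ce_strict _ Gd Nd G F HG HF) in h. destruct h as [_ h]; apply h.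
  apply (p_mono _ Gd); auto.
Qed.

Lemma mix_conv al k H (b : nat -> R) : 0 < al < 1 -> (forall n, Rabs (b n) <= en n) ->
  unif_conv (fun n => mix al (cst (k + b n)) H) (mix al (cst k) H).
Proof.
  intros Ha Hb. apply (unif_lemma _ _ 1); [lra|]. intros n x _; unfold mix, cst.
  specialize (Hb n). apply abs_le in Hb. apply abs_le. nra.
Qed.

Lemma mix_ind pref : Good pref -> ND pref -> forall F H k al, in_Qb F -> in_Qb H ->
  indf pref F (cst k) -> 0 < al < 1 -> indf pref (mix al F H) (mix al (cst k) H).
Proof.
  intros Gd Nd F H k al HF HH Hk Ha.
  assert (QM : forall G, in_Qb G -> in_Qb (mix al G H)) by (intros; apply Qb_mix; auto; lra).
  assert (Hm : forall n, Rabs (- en n) <= en n) by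
    (intros n; pose proof (en_pos n); apply abs_le; lra).
  assert (Hp : forall n, Rabs (en n) <= en n) by
    (intros n; pose proof (en_pos n); apply abs_le; lra).
  split.
  - apply (proj2 (p_cont _ Gd (mix al F H) _ _ (QM F HF) (fun n => QM _ (Qb_cst _))
                  (QM _ (Qb_cst _)) (mix_conv al k H (fun n => - en n) Ha Hm))).
    intros n. pose proof (en_pos n).
    assert (S : strict pref F (cst (k + - en n))).
    { apply (strict_ind _ Gd _ (cst k) _ (cst (k + - en n))); auto; try apply Qb_cst;
        try (split; apply (p_refl _ Gd); apply Qb_cst); try (apply Nd; lra). }
    exact (proj1 (p_dual _ Gd _ _ H al HF (Qb_cst _) HH Ha S)).
  - apply (proj1 (p_cont _ Gd (mix al F H) _ _ (QM F HF) (fun n => QM _ (Qb_cst _))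
                  (QM _ (Qb_cst _)) (mix_conv al k H (fun n => en n) Ha Hp))).
    intros n. pose proof (en_pos n).
    assert (S : strict pref (cst (k + en n)) F).
    { apply (strict_ind _ Gd _ (cst (k + en n)) _ (cst k)); auto; try apply Qb_cst;
        try (split; apply (p_refl _ Gd); apply Qb_cst); try (apply Nd; lra);
        try (apply ind_sym; auto). }
    exact (proj1 (p_dual _ Gd _ _ H al (Qb_cst _) HF HH Ha S)).
Qed.

Lemma ce_mix pref : Good pref -> ND pref -> forall F G al, in_Qb F -> in_Qb G -> 0 < al < 1 ->
  ce pref (mix al F G) = al * ce pref F + (1 - al) * ce pref G.
Proof.
  intros Gd Nd F G al HF HG Ha.
  set (a := ce pref F); set (b := ce pref G).
  assert (E1 := ce_spec _ Gd Nd F HF); assert (E2 := ce_spec _ Gd Nd G HG).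
  fold a in E1; fold b in E2.
  assert (Q1 : in_Qb (mix al F G)) by (apply Qb_mix; auto; lra).
  assert (Q2 : in_Qb (mix al (cst a) G)) by (apply Qb_mix; auto; try apply Qb_cst; lra).
  assert (Q3 : in_Qb (mix (1 - al) G (cst a))) by (apply Qb_mix; auto; try apply Qb_cst; lra).
  assert (Q4 : in_Qb (mix (1 - al) (cst b) (cst a))) by (apply Qb_mix; try apply Qb_cst; lra).
  apply ce_unique; auto.
  apply (ind_trans _ Gd _ (mix al (cst a) G)); auto; try apply Qb_cst.
  { apply mix_ind; auto. }
  apply (ind_trans _ Gd _ (mix (1 - al) G (cst a))); auto; try apply Qb_cst.
  { apply (p_ext _ Gd); auto. intros; unfold mix, cst; ring. }
  apply (ind_trans _ Gd _ (mix (1 - al) (cst b) (cst a))); auto; try apply Qb_cst.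
  { apply mix_ind; auto; try apply Qb_cst; lra. }
  apply (p_ext _ Gd); auto; try apply Qb_cst. intros; unfold mix, cst; ring.
Qed.

Lemma ce_scal pref : Good pref -> ND pref -> forall F a, in_Qb F -> 0 <= a ->
  ce pref (fun p => a * F p) = a * ce pref F.
Proof.
  intros Gd Nd F a HF Ha.
  assert (Q : in_Qb (fun p => a * F p)) by (apply Qb_scal; auto).
  destruct (Rtotal_order a 1) as [h|[h|h]].
  - destruct (Req_dec a 0) as [z|z].
    + subst a. rewrite (ce_ext _ Gd Nd _ (cst 0)); auto; try apply Qb_cst.
      * rewrite ce_cst; auto; ring.
      * intros; unfold cst; ring.
    + rewrite (ce_ext _ Gd Nd _ (mix a F (cst 0))); auto.
      * rewrite ce_mix; auto; try apply Qb_cst; try lra. rewrite ce_cst; auto; ring.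
      * apply Qb_mix; auto; try apply Qb_cst; lra.
      * intros; unfold mix, cst; ring.
  - subst a. rewrite Rmult_1_l. apply ce_ext; auto. intros; ring.
  - assert (E : ce pref F = ce pref (mix (/ a) (fun p => a * F p) (cst 0))).
    { apply ce_ext; auto. apply Qb_mix; auto; try apply Qb_cst.
      split; [apply Rlt_le, Rinv_0_lt_compat; lra|].
      rewrite <- Rinv_1; apply Rlt_le, Rinv_lt_contravar; lra.
      intros; unfold mix, cst; field; lra. }
    rewrite E, ce_mix; auto; try apply Qb_cst.
    + rewrite ce_cst; auto. field; lra.
    + split; [apply Rinv_0_lt_compat; lra|].
      rewrite <- Rinv_1; apply Rinv_lt_contravar; lra.
Qed.

Lemma ce_plus pref : Good pref -> ND pref -> forall F G, in_Qb F -> in_Qb G ->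
  ce pref (fun p => F p + G p) = ce pref F + ce pref G.
Proof.
  intros Gd Nd F G HF HG.
  assert (Q : in_Qb (mix (1/2) F G)) by (apply Qb_mix; auto; lra).
  rewrite (ce_ext _ Gd Nd _ (fun p => 2 * mix (1/2) F G p)); auto.
  - rewrite ce_scal, ce_mix; auto; lra.
  - apply Qb_plus; auto.
  - apply Qb_scal; auto; lra.
  - intros; unfold mix; field.
Qed.

Definition inD (f : R -> R) : Prop :=
  exists p : (R -> R) * (R -> R), in_Qb (fst p) /\ in_Qb (snd p) /\
    forall x, unit_int x -> f x = fst p x - snd p x.

Definition Lf pref (f : R -> R) : R :=
  match excluded_middle_informative (inD f) with
  | left h => let p := proj1_sig (constructive_indefinite_description _ h) in
              ce pref (fst p) - ce pref (snd p)
  | right _ => 0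
  end.

Lemma inD_mk f F G : in_Qb F -> in_Qb G -> (forall x, unit_int x -> f x = F x - G x) -> inD f.
Proof. intros; exists (F, G); auto. Qed.

Lemma Lf_spec pref : Good pref -> ND pref -> forall f F G, in_Qb F -> in_Qb G ->
  (forall x, unit_int x -> f x = F x - G x) -> Lf pref f = ce pref F - ce pref G.
Proof.
  intros Gd Nd f F G HF HG E. unfold Lf.
  destruct excluded_middle_informative as [h|h].
  - destruct (constructive_indefinite_description _ h) as [[F' G'] [HF' [HG' E']]]; simpl in *.
    assert (ce pref (fun p => F p + G' p) = ce pref (fun p => F' p + G p)).
    { apply ce_ext; auto; try (apply Qb_plus; auto).
      intros x Hx; specialize (E x Hx); specialize (E' x Hx); lra. }
    rewrite !ce_plus in H; auto. lra.
  - exfalso; apply h; exists (F, G); auto.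
Qed.

Ltac getD H := let F := fresh "F" in let G := fresh "G" in
  let HF := fresh "HF" in let HG := fresh "HG" in let E := fresh "E" in
  destruct H as [[F G] [HF [HG E]]]; simpl in HF, HG, E.

Lemma inD_lin pref : Good pref -> ND pref -> forall f g a, inD f -> inD g ->
  inD (fun x => a * f x + g x) /\ Lf pref (fun x => a * f x + g x) = a * Lf pref f + Lf pref g.
Proof.
  intros Gd Nd f g a Hf Hg. getD Hf. getD Hg.
  rewrite (Lf_spec _ Gd Nd f F G), (Lf_spec _ Gd Nd g F0 G0); auto.
  destruct (Rle_dec 0 a) as [h|h].
  - assert (Q1 : in_Qb (fun x => (fun p => a * F p) x + F0 x)) by (apply Qb_plus; auto; apply Qb_scal; auto).
    assert (Q2 : in_Qb (fun x => (fun p => a * G p) x + G0 x)) by (apply Qb_plus; auto; apply Qb_scal; auto).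
    assert (Ex : forall x, unit_int x -> a * f x + g x =
              (fun x => (fun p => a * F p) x + F0 x) x - (fun x => (fun p => a * G p) x + G0 x) x).
    { intros x Hx; rewrite E, E0; auto; ring. }
    split; [exact (inD_mk _ _ _ Q1 Q2 Ex)|].
    rewrite (Lf_spec _ Gd Nd _ _ _ Q1 Q2 Ex).
    rewrite !ce_plus, !ce_scal; auto; try apply Qb_scal; auto. ring.
  - assert (h' : 0 <= - a) by lra.
    assert (Q1 : in_Qb (fun x => (fun p => - a * G p) x + F0 x)) by (apply Qb_plus; auto; apply Qb_scal; auto).
    assert (Q2 : in_Qb (fun x => (fun p => - a * F p) x + G0 x)) by (apply Qb_plus; auto; apply Qb_scal; auto).
    assert (Ex : forall x, unit_int x -> a * f x + g x =
              (fun x => (fun p => - a * G p) x + F0 x) x - (fun x => (fun p => - a * F p) x + G0 x) x).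
    { intros x Hx; rewrite E, E0; auto; ring. }
    split; [exact (inD_mk _ _ _ Q1 Q2 Ex)|].
    rewrite (Lf_spec _ Gd Nd _ _ _ Q1 Q2 Ex).
    rewrite !ce_plus, !ce_scal; auto; try apply Qb_scal; auto. ring.
Qed.

Lemma inD_cst k : inD (cst k).
Proof. apply (inD_mk _ (cst k) (cst 0)); try apply Qb_cst. intros; unfold cst; ring. Qed.

Lemma Lf_cst pref : Good pref -> ND pref -> forall k, Lf pref (cst k) = k.
Proof.
  intros Gd Nd k. rewrite (Lf_spec _ Gd Nd _ (cst k) (cst 0)); try apply Qb_cst.
  rewrite !ce_cst; auto; ring. intros; unfold cst; ring.
Qed.

Lemma Lf_Qb pref : Good pref -> ND pref -> forall F, in_Qb F -> inD F /\ Lf pref F = ce pref F.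
Proof.
  intros Gd Nd F HF.
  assert (E : forall x, unit_int x -> F x = F x - cst 0 x) by (intros; unfold cst; ring).
  split; [exact (inD_mk _ _ _ HF (Qb_cst 0) E)|].
  rewrite (Lf_spec _ Gd Nd _ F (cst 0)); auto; try apply Qb_cst. rewrite ce_cst; auto; ring.
Qed.

Lemma Lf_mono pref : Good pref -> ND pref -> forall f g, inD f -> inD g ->
  (forall x, unit_int x -> f x <= g x) -> Lf pref f <= Lf pref g.
Proof.
  intros Gd Nd f g Hf Hg H. getD Hf. getD Hg.
  rewrite (Lf_spec _ Gd Nd f F G), (Lf_spec _ Gd Nd g F0 G0); auto.
  assert (ce pref (fun p => F0 p + G p) >= ce pref (fun p => F p + G0 p)).
  { apply ce_mono; auto; try (apply Qb_plus; auto).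
    intros x Hx; specialize (H x Hx); rewrite E, E0 in H; auto; lra. }
  rewrite !ce_plus in H0; auto. lra.
Qed.



Lemma Lf_ext pref : Good pref -> ND pref -> forall f g, inD f ->
  (forall x, unit_int x -> f x = g x) -> inD g /\ Lf pref g = Lf pref f.
Proof.
  intros Gd Nd f g Hf Eq. getD Hf.
  assert (Eg : forall x, unit_int x -> g x = F x - G x) by (intros x Hx; rewrite <- Eq; auto).
  split; [exact (inD_mk _ _ _ HF HG Eg)|].
  rewrite (Lf_spec _ Gd Nd g F G), (Lf_spec _ Gd Nd f F G); auto.
Qed.

Lemma Lf_close pref : Good pref -> ND pref -> forall f g d, inD f -> inD g ->
  (forall x, unit_int x -> Rabs (f x - g x) <= d) -> Rabs (Lf pref f - Lf pref g) <= d.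
Proof.
  intros Gd Nd f g d Hf Hg H.
  destruct (inD_lin _ Gd Nd g (cst d) 1 Hg (inD_cst d)) as [A1 B1].
  destruct (inD_lin _ Gd Nd f (cst d) 1 Hf (inD_cst d)) as [A2 B2].
  rewrite Lf_cst in B1, B2; auto.
  assert (Lf pref f <= Lf pref (fun x => 1 * g x + cst d x)).
  { apply Lf_mono; auto. intros x Hx; specialize (H x Hx); apply abs_le in H; unfold cst; lra. }
  assert (Lf pref g <= Lf pref (fun x => 1 * f x + cst d x)).
  { apply Lf_mono; auto. intros x Hx; specialize (H x Hx); apply abs_le in H; unfold cst; lra. }
  apply abs_le; lra.
Qed.

Lemma inD_max f g : inD f -> inD g -> inD (fun x => Rmax (f x) (g x)).
Proof.
  intros Hf Hg. getD Hf. getD Hg.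
  apply (inD_mk _ (fun x => Rmax ((fun p => F p + G0 p) x) ((fun p => F0 p + G p) x))
                  (fun p => G p + G0 p)).
  - apply Qb_max; apply Qb_plus; auto.
  - apply Qb_plus; auto.
  - intros x Hx; rewrite E, E0; auto. unfold Rmax; do 2 destruct Rle_dec; lra.
Qed.

Lemma inD_min f g : inD f -> inD g -> inD (fun x => Rmin (f x) (g x)).
Proof.
  intros Hf Hg. getD Hf. getD Hg.
  apply (inD_mk _ (fun x => Rmin ((fun p => F p + G0 p) x) ((fun p => F0 p + G p) x))
                  (fun p => G p + G0 p)).
  - apply Qb_min; apply Qb_plus; auto.
  - apply Qb_plus; auto.
  - intros x Hx; rewrite E, E0; auto. unfold Rmin; do 2 destruct Rle_dec; lra.
Qed.

Lemma indic_val A x : indic A x = 1 /\ A x \/ indic A x = 0 /\ ~ A x.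
Proof. unfold indic; destruct excluded_middle_informative; auto. Qed.

Lemma inD_indic A : Sigma A -> inD (indic A).
Proof.
  induction 1.
  - apply (inD_mk _ (step a) (step b)); try apply Qb_step.
    intros x Hx; unfold step. destruct (indic_val (fun x => a < x <= b) x) as [[h1 h2]|[h1 h2]];
      rewrite h1; do 2 destruct Rlt_dec; try lra; exfalso; apply h2; lra.
  - apply (inD_mk _ (cst 1) (cst 0)); try apply Qb_cst.
    intros x Hx; unfold cst. destruct (indic_val unit_int x) as [[h1 h2]|[h1 h2]]; rewrite h1;
      [lra| contradiction].
  - destruct IHSigma as [[F G] [HF [HG E]]]; simpl in *.
    apply (inD_mk _ (fun p => cst 1 p + G p) F); auto; try (apply Qb_plus; auto; apply Qb_cst).
    intros x Hx; unfold cst. specialize (E x Hx).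
    destruct (indic_val (fun x => unit_int x /\ ~ A x) x) as [[h1 h2]|[h1 h2]];
    destruct (indic_val A x) as [[h3 h4]|[h3 h4]]; rewrite h1; rewrite h3 in E; try lra; tauto.
  - destruct (inD_max _ _ IHSigma1 IHSigma2) as [[F G] [HF [HG E]]]; simpl in *.
    apply (inD_mk _ F G); auto. intros x Hx; rewrite <- E; auto.
    destruct (indic_val (fun x => A x \/ B x) x) as [[h1 h2]|[h1 h2]];
    destruct (indic_val A x) as [[h3 h4]|[h3 h4]];
    destruct (indic_val B x) as [[h5 h6]|[h5 h6]]; rewrite h1, h3, h5; unfold Rmax;
      destruct Rle_dec; try lra; tauto.
  - destruct (inD_min _ _ IHSigma1 IHSigma2) as [[F G] [HF [HG E]]]; simpl in *.
    apply (inD_mk _ F G); auto. intros x Hx; rewrite <- E; auto.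
    destruct (indic_val (fun x => A x /\ B x) x) as [[h1 h2]|[h1 h2]];
    destruct (indic_val A x) as [[h3 h4]|[h3 h4]];
    destruct (indic_val B x) as [[h5 h6]|[h5 h6]]; rewrite h1, h3, h5; unfold Rmin;
      destruct Rle_dec; try lra; tauto.
  - destruct IHSigma as [[F G] [HF [HG E]]]; simpl in *.
    apply (inD_mk _ F G); auto. intros x Hx; rewrite <- E; auto.
    destruct (indic_val A x) as [[h1 h2]|[h1 h2]];
    destruct (indic_val B x) as [[h3 h4]|[h3 h4]]; rewrite h1, h3; try lra;
      firstorder.
Qed.

Definition mu pref (A : R -> Prop) : R := Lf pref (indic A).

Lemma mu_fa pref : Good pref -> ND pref -> fa_measure (mu pref).
Proof.
  intros Gd Nd A B HA HB Dj. unfold mu.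
  destruct (inD_lin _ Gd Nd (indic A) (indic B) 1 (inD_indic A HA) (inD_indic B HB)) as [I1 L1].
  destruct (Lf_ext _ Gd Nd _ (indic (fun x => A x \/ B x)) I1) as [_ L2].
  { intros x _. destruct (indic_val (fun x => A x \/ B x) x) as [[h1 h2]|[h1 h2]];
    destruct (indic_val A x) as [[h3 h4]|[h3 h4]];
    destruct (indic_val B x) as [[h5 h6]|[h5 h6]]; rewrite h1, h3, h5; try lra; firstorder. }
  rewrite L2, L1; ring.
Qed.

Lemma mu_nonneg pref : Good pref -> ND pref -> nonneg_measure (mu pref).
Proof.
  intros Gd Nd A HA. unfold mu. rewrite <- (Lf_cst _ Gd Nd 0).
  apply Lf_mono; auto. apply inD_cst. apply inD_indic; auto.
  intros x _; unfold cst; destruct (indic_val A x) as [[h _]|[h _]]; lra.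
Qed.

Lemma mu_bounded pref : Good pref -> ND pref -> bounded_measure (mu pref).
Proof.
  intros Gd Nd. exists 1. intros A HA. apply abs_le.
  assert (H1 := mu_nonneg _ Gd Nd A HA).
  assert (mu pref A <= 1); [|lra].
  unfold mu. rewrite <- (Lf_cst _ Gd Nd 1).
  apply Lf_mono; auto. apply inD_indic; auto. apply inD_cst.
  intros x _; unfold cst; destruct (indic_val A x) as [[h _]|[h _]]; lra.
Qed.

Lemma simple_Lf pref : Good pref -> ND pref -> forall s, simple_ok s ->
  inD (simple_val s) /\ Lf pref (simple_val s) = simple_int (mu pref) s.
Proof.
  intros Gd Nd. induction s as [|c s IH]; intros Hs.
  - destruct (Lf_ext _ Gd Nd (cst 0) (simple_val nil) (inD_cst 0)) as [A B].
    { intros; reflexivity. }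
    split; auto. rewrite B, Lf_cst; auto.
  - assert (Hc : Sigma (snd c)) by (apply Hs; left; auto).
    assert (Hs' : simple_ok s) by (intros c' Hc'; apply Hs; right; auto).
    destruct (IH Hs') as [I1 L1].
    destruct (inD_lin _ Gd Nd (indic (snd c)) (simple_val s) (fst c) (inD_indic _ Hc) I1) as [I2 L2].
    destruct (Lf_ext _ Gd Nd _ (simple_val (c :: s)) I2) as [I3 L3].
    { intros; reflexivity. }
    split; auto. rewrite L3, L2, L1. reflexivity.
Qed.

Definition Qp pref (Phi : R -> R) (I : R) : Prop :=
  forall d s, d > 0 -> simple_ok s ->
    (forall x, unit_int x -> Rabs (Phi x - simple_val s x) < d) ->
    Rabs (simple_int (mu pref) s - I) <= d.

Lemma Q_DS pref Phi I : in_B_Sigma Phi -> Qp pref Phi I -> DS_integral (mu pref) Phi I.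
Proof.
  intros HB HQ. split; auto. intros eps He. exists (eps / 2); split; [lra|].
  intros s Hs Hc. assert (Rabs (simple_int (mu pref) s - I) <= eps / 2); [|lra].
  apply HQ; auto; lra.
Qed.

Lemma two_simple pref : Good pref -> ND pref -> forall Phi s s' d d', simple_ok s -> simple_ok s' ->
  (forall x, unit_int x -> Rabs (Phi x - simple_val s x) < d) ->
  (forall x, unit_int x -> Rabs (Phi x - simple_val s' x) < d') ->
  simple_int (mu pref) s' - d' <= simple_int (mu pref) s + d.
Proof.
  intros Gd Nd Phi s s' d d' Hs Hs' H H'.
  destruct (simple_Lf _ Gd Nd s Hs) as [I1 L1]; destruct (simple_Lf _ Gd Nd s' Hs') as [I2 L2].
  assert (C := Lf_close _ Gd Nd _ _ (d + d') I2 I1).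
  rewrite L1, L2 in C. apply abs_le in C; [lra|].
  intros x Hx; specialize (H x Hx); specialize (H' x Hx).
  apply abs_lt in H; apply abs_lt in H'; apply abs_le; lra.
Qed.

Lemma Q_exists pref : Good pref -> ND pref -> forall Phi, in_B_Sigma Phi -> exists I, Qp pref Phi I.
Proof.
  intros Gd Nd Phi HB.
  set (E := fun r => exists s d, simple_ok s /\ d > 0 /\
             (forall x, unit_int x -> Rabs (Phi x - simple_val s x) < d) /\
             r = simple_int (mu pref) s - d).
  destruct (HB 1 ltac:(lra)) as [s0 [Hs0 H0]].
  assert (Hb : bound E).
  { exists (simple_int (mu pref) s0 + 1). intros r [s [d [Hs [Hd [H ->]]]]].
    apply (two_simple _ Gd Nd Phi); auto. }
  assert (Hne : exists r, E r).
  { exists (simple_int (mu pref) s0 - 1); exists s0, 1; split; [auto|split; [lra|split; [exact H0|reflexivity]]]. }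
  destruct (completeness E Hb Hne) as [I [HI1 HI2]].
  exists I. intros d s Hd Hs H. apply abs_le. split.
  - assert (I <= simple_int (mu pref) s + d); [|lra].
    apply HI2. intros r [s' [d' [Hs' [Hd' [H' ->]]]]].
    apply (two_simple _ Gd Nd Phi); auto.
  - assert (simple_int (mu pref) s - d <= I); [|lra].
    apply HI1. exists s, d; repeat split; auto.
Qed.

Lemma Q_D pref : Good pref -> ND pref -> forall Phi, inD Phi -> Qp pref Phi (Lf pref Phi).
Proof.
  intros Gd Nd Phi HD d s Hd Hs H.
  destruct (simple_Lf _ Gd Nd s Hs) as [I1 L1]. rewrite <- L1.
  apply Lf_close; auto. intros x Hx; specialize (H x Hx).
  apply abs_lt in H; apply abs_le; lra.
Qed.

Definition Uf pref (Phi : R -> R) : R :=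
  if excluded_middle_informative (inD Phi) then Lf pref Phi else
  match excluded_middle_informative (exists I, Qp pref Phi I) with
  | left h => proj1_sig (constructive_indefinite_description _ h)
  | right _ => 0
  end.

Lemma Uf_DS pref : Good pref -> ND pref -> forall Phi, in_B_Sigma Phi ->
  DS_integral (mu pref) Phi (Uf pref Phi).
Proof.
  intros Gd Nd Phi HB. apply Q_DS; auto. unfold Uf.
  destruct excluded_middle_informative as [h|h]; [apply Q_D; auto|].
  destruct excluded_middle_informative as [h'|h'].
  - exact (proj2_sig (constructive_indefinite_description _ h')).
  - exfalso; apply h'; apply Q_exists; auto.
Qed.

Lemma Uf_Qb pref : Good pref -> ND pref -> forall Phi, in_Qb Phi -> Uf pref Phi = ce pref Phi.
Proof.
  intros Gd Nd Phi HQ. destruct (Lf_Qb _ Gd Nd Phi HQ) as [I L].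
  unfold Uf. destruct excluded_middle_informative; [auto|contradiction].
Qed.

Lemma simple_int_zero s : simple_int (fun _ => 0) s = 0.
Proof. induction s as [|c s IH]; simpl; auto. rewrite IH; ring. Qed.

Theorem mainTheorem10 (pref : (R -> R) -> (R -> R) -> Prop) :
  total_preorder pref -> pref_continuous pref -> pref_monotonic pref ->
  dual_independence pref ->
  exists mu : (R -> Prop) -> R,
    fa_measure mu /\ nonneg_measure mu /\ bounded_measure mu /\
    exists U : (R -> R) -> R,
      (forall Phi, in_B_Sigma Phi -> DS_integral mu Phi (U Phi)) /\
      (forall Phi Psi, in_Qb Phi -> in_Qb Psi ->
         (strict pref Phi Psi <-> U Phi > U Psi)).
Proof.
  intros Htp Hc Hm Hd.
  assert (Gd : Good pref) by (split; [|split; [|split]]; auto).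
  destruct (classic (forall a b, pref (cst b) (cst a))) as [Deg|NDeg].
  - exists (fun _ => 0). split; [|split; [|split]].
    + intros A B _ _ _; ring.
    + intros A _; lra.
    + exists 0; intros; rewrite Rabs_R0; lra.
    + exists (fun _ => 0). split.
      * intros Phi HB; split; auto. intros eps He; exists 1; split; [lra|].
        intros s _ _. rewrite simple_int_zero, Rminus_0_r, Rabs_R0; lra.
      * intros Phi Psi HP HQ; split; [|lra].
        intros [_ N]; exfalso; apply N; apply (degenerate _ Gd Deg); auto.
  - apply not_all_ex_not in NDeg; destruct NDeg as [a NDeg].
    apply not_all_ex_not in NDeg; destruct NDeg as [b NDeg].
    assert (Nd : ND pref) by (exact (strict_consts _ Gd a b NDeg)).
    exists (mu pref). split; [apply mu_fa; auto|]. split; [apply mu_nonneg; auto|].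
    split; [apply mu_bounded; auto|].
    exists (Uf pref). split; [apply Uf_DS; auto|].
    intros Phi Psi HP HQ. rewrite !Uf_Qb; auto. apply ce_strict; auto.
Qed.
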